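(* Let $G$ be a finite graph, $X$ its graph C*-correspondence over $A=C(G^{(0)})$, and $\beta>0$. Then \[\operatorname{Tr}_\beta(A)=\{\tau\in\operatorname{Tr}(A):h_X^\tau<\beta\}\quad\text{and}\quad\operatorname{Avt}_\beta(A)=\{\tau\in\operatorname{Tr}(A):G^t\tau=e^\beta\tau\},\] where $\tau$ is identified with the vector $(\tau(p_{v_1}),\dots,\tau(p_{v_n}))^t$.
   Context: $G$ is a finite directed graph with vertices $v_1,\dots,v_n$, edges $G^{(1)}$, source/range maps $s,r$; adjacency matrix $G_{ij}=\#\{e:s(e)=v_i,r(e)=v_j\}$, $G^t$ its transpose. $A=C(G^{(0)})$ spanned by orthogonal projections $p_v$; $\operatorname{Tr}(A)$ its (tracial) states, i.e. probability vectors. The graph C*-correspondence $X$ is spanned by $x_e$, $e\in G^{(1)}$, with $\langle x_e,x_f\rangle=\delta_{e,f}p_{s(f)}$, $p_vx_e=\delta_{v,r(e)}x_e$, $x_ep_v=\delta_{s(e),v}x_e$; $\{x_e\}$ is a unit decomposition. For edge words $\mu=\mu_k\cdots\mu_1$, $x_\mu=x_{\mu_k}\otimes\cdots\otimes x_{\mu_1}$, $x_\emptyset=1$. $c_{\tau,\beta}=\sum_{k\ge0}e^{-k\beta}\sum_{|\mu|=k}\tau(\langle x_\mu,x_\mu\rangle)$; $\operatorname{Tr}_\beta(A)=\{\tau:c_{\tau,\beta}<\infty\}$; $\operatorname{Avt}_\beta(A)=\{\tau:\tau(a)=e^{-\beta}\sum_{e}\tau(\langle x_e,ax_e\rangle)\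 \forall a\in A\}$. $h_X^\tau=\limsup_k k^{-1}\log\sum_{|\mu|=k}\tau(\langle x_\mu,x_\mu\rangle)$, taken to be $0$ if the terms eventually vanish. *)

(* Defs.v *)
From HB Require Import structures.
From mathcomp Require Import all_boot all_order all_algebra.
From mathcomp Require Import all_classical all_reals all_analysis.
Set Implicit Arguments. Unset Strict Implicit. Unset Printing Implicit Defensive.
Import Order.TTheory GRing.Theory Num.Theory.
Local Open Scope ring_scope.

(* A finite directed graph: vertices 'I_n, edges a finType E, maps s r.
   A = C(G^(0)) is identified with functions 'I_n -> R (p_v = indicator of v). *)
Section GraphCorr.
Variables (R : realType) (n : nat) (E : finType) (s r : E -> 'I_n).

Definition proj (v : 'I_n) : 'I_n -> R := fun w => (w == v)%:R.

(* <x_e, a x_e> = a(r e) p_{s e}, since a x_e = a(r e) x_e *)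
Definition ip_edge (e : E) (a : 'I_n -> R) : 'I_n -> R :=
  fun w => a (r e) * proj (s e) w.

(* For a word mu = [:: mu_k; ...; mu_1] (leftmost = mu_k),
   x_mu = x_{mu_k} (x) ... (x) x_{mu_1}, and
   word_ip mu a = <x_mu, a x_mu>, computed by
   <x (x) y, a (x (x) y)> = <y, <x, a x> y>, and <1, a 1> = a. *)
Fixpoint word_ip (mu : seq E) (a : 'I_n -> R) : 'I_n -> R :=
  match mu with
  | [::] => a
  | e :: mu' => word_ip mu' (ip_edge e a)
  end.

Definition one_A : 'I_n -> R := fun _ => 1.

Definition word_norm (mu : seq E) : 'I_n -> R := word_ip mu one_A.

(* tracial states of A = probability vectors *)
Definition is_state (tau : 'I_n -> R) : Prop :=
  (forall v, 0 <= tau v) /\ \sum_(v < n) tau v = 1.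

Definition evs (tau : 'I_n -> R) (a : 'I_n -> R) : R := \sum_(v < n) tau v * a v.

Definition Sk (tau : 'I_n -> R) (k : nat) : R :=
  \sum_(mu : k.-tuple E) evs tau (word_norm mu).

Definition Tr_beta (beta : R) (tau : 'I_n -> R) : Prop :=
  is_state tau /\
  (\sum_(0 <= k <oo) ((expR (- (k%:R * beta)) * Sk tau k)%:E) < +oo)%E.

Definition Avt_beta (beta : R) (tau : 'I_n -> R) : Prop :=
  is_state tau /\
  forall a : 'I_n -> R,
    evs tau a = expR (- beta) * \sum_(e : E) evs tau (ip_edge e a).

Definition entropy (tau : 'I_n -> R) : \bar R :=
  if `[< exists N : nat, forall k, (N <= k)%N -> Sk tau k = 0 >] then 0%E
  else limn_esup (fun k : nat => (ln (Sk tau k) / k%:R)%:E).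

Definition adjmx : 'M[R]_n :=
  \matrix_(i, j) (#|[set e : E | (s e == i) && (r e == j)]|)%:R.

Definition colvec (tau : 'I_n -> R) : 'cV[R]_n := \col_i tau i.

End GraphCorr.

(* Main.v *)
Require Import Defs.
From HB Require Import structures.
From mathcomp Require Import all_boot all_order all_algebra.
From mathcomp Require Import all_classical all_reals all_analysis.
From mathcomp Require Import lra ring.
Import Order.TTheory GRing.Theory Num.Theory.
Set Implicit Arguments. Unset Strict Implicit. Unset Printing Implicit Defensive.
Local Open Scope ring_scope.
Lemma sum_tuple_cons (V : nmodType) (E : finType) k (F : k.+1.-tuple E -> V) :
  \sum_(t : k.+1.-tuple E) F t = \sum_(e : E) \sum_(t : k.-tuple E) F [tuple of e :: t].
Proof.
rewrite pair_big /=.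
rewrite (reindex (fun p : E * k.-tuple E => [tuple of p.1 :: p.2])) //=.
exists (fun t : k.+1.-tuple E => (thead t, [tuple of behead t])).
  by move=> [e t] _ /=; congr pair; apply: val_inj.
by move=> t _; apply: val_inj => /=; rewrite [in RHS](tuple_eta t).
Qed.

Lemma sum_tuple_rev (V : nmodType) (E : finType) k (F : k.-tuple E -> V) :
  \sum_(t : k.-tuple E) F t = \sum_(t : k.-tuple E) F (rev_tuple t).
Proof.
rewrite (reindex_inj (h := @rev_tuple k E)) //.
by move=> t1 t2 /(congr1 val) /= /(congr1 rev); rewrite !revK => /val_inj.
Qed.

Lemma word_ip_rcons (R : realType) n (E : finType) (s r : E -> 'I_n) mu e a :
  word_ip (R:=R) s r (rcons mu e) a = ip_edge s r e (word_ip s r mu a).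
Proof. by elim: mu a => [|f mu IH] a //=. Qed.

Definition T (R : realType) n (E : finType) (s r : E -> 'I_n) k (w : 'I_n) : R :=
  \sum_(t : k.-tuple E) word_norm R s r t w.

Lemma T0 (R : realType) n (E : finType) (s r : E -> 'I_n) w :
  T R s r 0 w = 1.
Proof.
rewrite /T (eq_bigr (fun _ => 1)); last first.
  by move=> t _; rewrite (tuple0 t).
by rewrite sumr_const card_tuple expn0.
Qed.

Lemma TS (R : realType) n (E : finType) (s r : E -> 'I_n) k w :
  T R s r k.+1 w = \sum_(e | s e == w) T R s r k (r e).
Proof.
rewrite /T sum_tuple_rev sum_tuple_cons [RHS]big_mkcond /=. apply: eq_bigr => e _.
rewrite (sum_tuple_rev (fun t : k.-tuple E => word_norm R s r t (r e))).
case: ifP => swe.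
- apply: eq_bigr => t _; rewrite /= rev_cons /word_norm word_ip_rcons /ip_edge.
  by rewrite /Defs.proj eq_sym swe mulr1.
- rewrite big1 // => t _; rewrite /= rev_cons /word_norm word_ip_rcons /ip_edge.
  by rewrite /Defs.proj eq_sym swe mulr0.
Qed.

Lemma T_ge0 (R : realType) n (E : finType) (s r : E -> 'I_n) k w :
  0 <= T R s r k w.
Proof.
elim: k w => [|k IH] w; first by rewrite T0.
by rewrite TS; apply: sumr_ge0.
Qed.

Lemma Sk_T (R : realType) n (E : finType) (s r : E -> 'I_n) tau k :
  Sk (R:=R) s r tau k = \sum_(v < n) tau v * T R s r k v.
Proof.
rewrite /Sk /evs exchange_big /=; apply: eq_bigr => v _.
by rewrite /T mulr_sumr.
Qed.
Definition A (R : realType) n (E : finType) (s r : E -> 'I_n) (beta : R) N w : R :=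
  \sum_(k < N.+1) expR (- (k%:R * beta)) * T R s r k w.

Lemma A_S (R : realType) n (E : finType) (s r : E -> 'I_n) (beta : R) N w :
  A s r beta N.+1 w = 1 + expR (- beta) * \sum_(e | s e == w) A s r beta N (r e).
Proof.
rewrite /A big_ord_recl /= mul0r oppr0 expR0 T0 mul1r; congr (_ + _).
rewrite mulr_sumr.
transitivity (\sum_(i < N.+1) \sum_(e | s e == w)
   expR (- beta) * (expR (- (i%:R * beta)) * T R s r i (r e))).
  apply: eq_bigr => i _; rewrite TS !mulr_sumr; apply: eq_bigr => e _.
  rewrite mulrA -expRD /bump /=; congr (expR _ * _).
  rewrite add1n -addn1 natrD; lra.
rewrite exchange_big /=; apply: eq_bigr => e _; by rewrite mulr_sumr.
Qed.

Lemma A_S' (R : realType) n (E : finType) (s r : E -> 'I_n) (beta : R) N w :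
  \sum_(e | s e == w) A s r beta N (r e) = expR beta * (A s r beta N.+1 w - 1).
Proof.
by rewrite A_S [1 + _]addrC addrK mulrA -expRD subrr expR0 mul1r.
Qed.

Lemma A_ge1 (R : realType) n (E : finType) (s r : E -> 'I_n) (beta : R) N w :
  1 <= A s r beta N w.
Proof.
rewrite /A big_ord_recl /= mul0r oppr0 expR0 T0 mul1r lerDl.
by apply: sumr_ge0 => i _; rewrite mulr_ge0 ?T_ge0 // ltW // expR_gt0.
Qed.

Lemma sumA (R : realType) n (E : finType) (s r : E -> 'I_n) (beta : R) tau N :
  \sum_(v < n) tau v * A s r beta N v =
  \sum_(k < N.+1) expR (- (k%:R * beta)) * Sk s r tau k.
Proof.
under eq_bigr do rewrite /A mulr_sumr.
rewrite exchange_big /=; apply: eq_bigr => k _.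
rewrite Sk_T mulr_sumr; apply: eq_bigr => v _; lra.
Qed.

Lemma key_bound (R : realType) n (E : finType) (s r : E -> 'I_n) (beta : R) tau L :
  0 < beta -> is_state tau ->
  (forall N, \sum_(k < N.+1) expR (- (k%:R * beta)) * Sk s r tau k <= L) ->
  exists M l, [/\ 1 <= M, 0 <= l, l < expR beta &
     forall k, Sk s r tau k <= M * l ^+ k].
Proof.
move=> b0 [tau0 tau1] HL.
pose W w := exists B, forall N, A s r beta N w <= B.
have Wtau w : 0 < tau w -> W w.
  move=> tw; exists (L / tau w) => N.
  rewrite ler_pdivlMr // mulrC.
  apply: le_trans (HL N); rewrite -sumA (bigD1 w) //= lerDl.
  by apply: sumr_ge0 => v _; rewrite mulr_ge0 // (le_trans _ (A_ge1 _ _ _ _ _)).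
have Wr e : W (s e) -> W (r e).
  move=> [B HB]; exists (expR beta * B) => N.
  have h1 : A s r beta N (r e) <= \sum_(e' | s e' == s e) A s r beta N (r e').
    rewrite (bigD1 e) //= lerDl; apply: sumr_ge0 => e' _.
    exact: (le_trans _ (A_ge1 _ _ _ _ _)).
  apply: (le_trans h1); rewrite A_S' ler_wpM2l ?(ltW (expR_gt0 beta)) //.
  by apply: le_trans (HB N.+1); rewrite lerBlDr lerDl.
have : forall w, exists m : R, 0 <= m /\ (W w -> forall N, A s r beta N w <= m).
  move=> w; case: (pselect (W w)) => [[B HB]|nW].
    by exists (Num.max B 0); split; [rewrite le_max lexx orbT|
       move=> _ N; rewrite le_max HB].
  by exists 0; split => // /nW.
move=> /choice[f Hf].
pose M := 1 + \sum_w f w.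
have fM w : f w <= M.
  rewrite /M (bigD1 w) //= addrCA lerDl addr_ge0 //.
  by apply: sumr_ge0 => v _; case: (Hf v).
have M1 : 1 <= M by rewrite /M lerDl; apply: sumr_ge0 => v _; case: (Hf v).
have M0 : 0 < M by apply: lt_le_trans M1.
have AM w N : W w -> A s r beta N w <= M.
  by move=> Ww; apply: le_trans (fM w); case: (Hf w) => _ /(_ Ww).
pose l := expR beta * (1 - M^-1).
have Mi1 : M^-1 <= 1 by rewrite invf_le1.
have Mi0 : 0 < M^-1 by rewrite invr_gt0.
have eb0 := expR_gt0 beta.
have l0 : 0 <= l by rewrite /l mulr_ge0 ?(ltW eb0) // subr_ge0.
have claim : forall k N w, W w -> T R s r k w <= l ^+ k * A s r beta (N + k) w.
  elim=> [|k IH] N w Ww; first by rewrite T0 expr0 mul1r addn0 A_ge1.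
  rewrite TS.
  apply: (@le_trans _ _ (\sum_(e | s e == w) l ^+ k * A s r beta (N + k) (r e))).
    apply: ler_sum => e /eqP swe; apply: IH; apply: Wr; by rewrite swe.
  rewrite -mulr_sumr A_S' addnS exprSr -mulrA ler_wpM2l ?exprn_ge0 //.
  have X1 := A_ge1 s r beta (N + k).+1 w.
  have XM := AM w (N + k).+1 Ww.
  set X := A _ _ _ _ _ in X1 XM *.
  have XMi : X * M^-1 <= 1 by rewrite ler_pdivrMr // mul1r.
  have h : 0 <= expR beta * (1 - X / M) by rewrite mulr_ge0 ?(ltW eb0) // subr_ge0.
  rewrite /l; nra.
exists M, l; split => //.
  by rewrite /l gtr_pMr // ltrBlDr ltrDl.
move=> k; rewrite Sk_T.
apply: (@le_trans _ _ (\sum_(v < n) tau v * (M * l ^+ k))); last first.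
  by rewrite -mulr_suml tau1 mul1r.
apply: ler_sum => v _.
have := tau0 v; rewrite le0r => /orP[/eqP->|tv]; first by rewrite !mul0r.
rewrite ler_wpM2l ?(ltW tv) // mulrC.
apply: le_trans (claim k 0 v (Wtau v tv)) _.
by rewrite ler_wpM2l ?exprn_ge0 // AM //; apply: Wtau.
Qed.
Local Open Scope classical_set_scope.
Lemma esup_lt (R : realType) (u : nat -> R) M l beta :
  0 < beta -> 1 <= M -> 0 <= l -> l < expR beta ->
  (forall k, 0 <= u k <= M * l ^+ k) ->
  (limn_esup (fun k => (ln (u k) / k%:R)%:E) < beta%:E)%E.
Proof.
move=> b0 M1 l0 lb hu.
pose l' := Num.max l 1.
have l'1 : 1 <= l' by rewrite le_max lexx orbT.
have l'0 : 0 < l' by apply: lt_le_trans l'1.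
have l'b : l' < expR beta by rewrite gt_max lb expR_gt1.
have lnl'b : ln l' < beta.
  by rewrite -[X in _ < X](expRK beta) ltr_ln // posrE expR_gt0.
have lnl'0 : 0 <= ln l' by apply: ln_ge0.
have lnM0 : 0 <= ln M by apply: ln_ge0.
pose d := (beta - ln l') / 2.
have d0 : 0 < d by rewrite /d divr_gt0 // subr_gt0.
pose c := ln l' + d.
have cb : c < beta by rewrite /c /d; lra.
pose K := (Num.truncn (ln M / d)).+1.
have bnd k : (K <= k)%N -> ln (u k) / k%:R <= c.
  move=> Kk.
  have k0 : (0 < k)%N by apply: leq_trans Kk.
  have k0' : 0 < k%:R :> R by rewrite ltr0n.
  have hlnM : ln M < k%:R * d.
    have := truncnS_gt (ln M / d); rewrite -/K => h.
    have hK : (K%:R : R) <= k%:R by rewrite ler_nat.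
    have : ln M / d < k%:R by apply: lt_le_trans hK.
    by rewrite ltr_pdivrMr // .
  have hln : ln (u k) <= ln M + k%:R * ln l'.
    have [uk0|uk0] := leP (u k) 0.
      rewrite ln0 //; apply: addr_ge0 => //; exact: mulr_ge0.
    have ukM : u k <= M * l' ^+ k.
      case/andP: (hu k) => _ h; apply: le_trans h _.
      rewrite ler_wpM2l ?(le_trans ler01 M1) //.
      have hl : l <= l' by rewrite le_max lexx.
      by apply: (lerXn2r k) => //; rewrite nnegrE // ltW.
    have Mp : 0 < M * l' ^+ k by rewrite mulr_gt0 ?exprn_gt0 // (lt_le_trans ltr01 M1).
    rewrite -ler_ln ?posrE // in ukM.
    apply: le_trans ukM _.
    rewrite lnM ?posrE ?exprn_gt0 ?(lt_le_trans ltr01 M1) // lnXn // mulr_natl.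
    done.
  rewrite ler_pdivrMr //.
  apply: le_trans hln _; rewrite /c mulrDl; lra.
have : (limn_esup (fun k => (ln (u k) / k%:R)%:E) <= c%:E)%E.
  rewrite /limn_esup limf_esupE.
  apply: (@le_trans _ _ (ereal_sup [set (ln (u k) / k%:R)%:E | k in [set k | (K <= k)%N]])).
    apply: ereal_inf_lbound; exists [set k | (K <= k)%N] => //; exists K => //.
  apply: ge_ereal_sup => _ [k /= Kk <-]; rewrite lee_fin; exact: bnd.
move=> h; apply: le_lt_trans h _; by rewrite lte_fin.
Qed.

Lemma esup_to_bound (R : realType) (u : nat -> R) beta :
  (forall k, 0 <= u k) ->
  (limn_esup (fun k => (ln (u k) / k%:R)%:E) < beta%:E)%E ->
  exists g N, g < beta /\ forall k, (N <= k)%N -> u k <= expR (k%:R * g).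
Proof.
move=> u0; rewrite /limn_esup limf_esupE => /ereal_inf_lt[_ [V [N _ HN] <-]] Hy.
have ub k : (N <= k)%N -> ((ln (u k) / k%:R)%:E <= ereal_sup [set (ln (u k) / k%:R)%:E | k in V])%E.
  by move=> Nk; apply: ereal_sup_ubound; exists k => //; apply: HN.
move: ub Hy; case: (ereal_sup _) => [g| |] ub Hy.
- exists g, N.+1; split; first by rewrite -lte_fin.
  move=> k Nk; have k0 : 0 < k%:R :> R by rewrite ltr0n; apply: leq_trans Nk.
  have := ub k (ltnW Nk); rewrite lee_fin ler_pdivrMr // => h.
  have [uk0|uk0] := leP (u k) 0; first by apply: le_trans uk0 _; exact: ltW (expR_gt0 _).
  by rewrite -(lnK (x := u k)) ?posrE // ler_expR mulrC.
- by [].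
- by have := ub N (leqnn N); rewrite leeNy_eq.
Qed.

Lemma series_fin (R : realType) (u : nat -> R) beta g N :
  g < beta -> (forall k, 0 <= u k) ->
  (forall k, (N <= k)%N -> u k <= expR (k%:R * g)) ->
  (\sum_(0 <= k <oo) ((expR (- (k%:R * beta)) * u k)%:E) < +oo)%E.
Proof.
move=> gb u0 hu.
pose t k := expR (- (k%:R * beta)) * u k.
have t0 k : 0 <= t k by rewrite /t mulr_ge0 // ltW // expR_gt0.
pose q := expR (g - beta).
have q0 : 0 < q by exact: expR_gt0.
have q1 : q < 1 by rewrite /q -expR0 ltr_expR subr_lt0.
have tq k : t k <= (k < N)%N%:R * t k + q ^+ k.
  case: ltnP => kN; first by rewrite mul1r lerDl exprn_ge0 // ltW.
  rewrite mul0r add0r /q -expRM_natl /t.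
  apply: le_trans (ler_wpM2l (ltW (expR_gt0 _)) (hu k kN)) _.
  by rewrite -expRD ler_expR; rewrite le_eqVlt; apply/orP; left; apply/eqP; rewrite mulrBr; lra.
pose B := \sum_(0 <= k < N) t k + (1 - q)^-1.
have psum m : \sum_(0 <= k < m) t k <= B.
  apply: (@le_trans _ _ (\sum_(0 <= k < m) ((k < N)%N%:R * t k + q ^+ k))).
    by apply: ler_sum => k _; exact: tq.
  rewrite big_split /=; apply: lerD.
    apply: (@le_trans _ _ (\sum_(0 <= k < m + N) (k < N)%N%:R * t k)).
      rewrite [X in _ <= X](big_cat_nat (n := m)) //= ?leq_addr // lerDl.
      by apply: sumr_ge0 => k _; rewrite mulr_ge0.
    rewrite (big_cat_nat (n := N)) //= ?leq_addl //.
    rewrite [X in _ + X]big1_seq ?addr0; last first.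
      by move=> k /andP[_]; rewrite mem_index_iota => /andP[/leq_gtF-> _]; rewrite mul0r.
    rewrite le_eqVlt; apply/orP; left; apply/eqP/eq_big_nat => k /andP[_ ->]; by rewrite mul1r.
  have := geometric_le_lim m (@ler01 R) q0; rewrite mul1r ger0_norm ?(ltW q0) //.
  move=> /(_ q1).
  move=> h; apply: le_trans h; rewrite le_eqVlt; apply/orP; left; apply/eqP; rewrite /series /=; apply/eq_bigr => i _; by rewrite mul1r.
apply: (le_lt_trans _ (ltry B)).
apply: lime_le; first by apply: is_cvg_ereal_nneg_natsum => k _; rewrite lee_fin mulr_ge0 // ltW // expR_gt0.
near=> m; rewrite sumEFin lee_fin; exact: psum.
Unshelve. all: by end_near.
Qed.

Lemma series_bound (R : realType) (u : nat -> R) beta :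
  (forall k, 0 <= u k) ->
  (\sum_(0 <= k <oo) ((expR (- (k%:R * beta)) * u k)%:E) < +oo)%E ->
  exists L, forall N, \sum_(k < N.+1) expR (- (k%:R * beta)) * u k <= L.
Proof.
move=> u0 hs.
have ge k : (\sum_(0 <= i < k) ((expR (- (i%:R * beta)) * u i)%:E) <=
   \sum_(0 <= i <oo) ((expR (- (i%:R * beta)) * u i)%:E))%E.
  apply: nneseries_lim_ge => i _ _; rewrite lee_fin mulr_ge0 // ltW // expR_gt0.
move: ge hs; case: (\sum_(0 <= i <oo) _)%E => [L| |] ge hs //.
- exists L => N; have := ge N.+1; by rewrite sumEFin lee_fin big_mkord.
- have := ge 0%N; by rewrite big_geq.
Qed.
Local Close Scope classical_set_scope.
Lemma evs_ip (R : realType) n (E : finType) (s r : E -> 'I_n) (tau a : 'I_n -> R) e :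
  evs tau (ip_edge s r e a) = tau (s e) * a (r e).
Proof.
rewrite /evs /ip_edge /Defs.proj (bigD1 (s e)) //= eqxx mulr1 big1 ?addr0 //.
by move=> v /negbTE ->; rewrite !mulr0.
Qed.

Lemma evs_proj (R : realType) n (tau : 'I_n -> R) u :
  evs tau (Defs.proj R u) = tau u.
Proof.
rewrite /evs /Defs.proj (bigD1 u) //= eqxx mulr1 big1 ?addr0 //.
by move=> v /negbTE ->; rewrite !mulr0.
Qed.

Lemma adj_col (R : realType) n (E : finType) (s r : E -> 'I_n) (tau : 'I_n -> R) u j :
  ((adjmx R s r)^T *m colvec tau) u j = \sum_(e | r e == u) tau (s e).
Proof.
rewrite !mxE.
transitivity (\sum_(k < n) \sum_e (if (s e == k) && (r e == u) then tau k else 0)).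
  apply: eq_bigr => k _; rewrite !mxE -sum1_card natr_sum mulr_suml big_mkcond /=.
  by apply: eq_bigr => e _; rewrite inE; case: ifP; rewrite ?mul1r ?mul0r.
rewrite exchange_big [RHS]big_mkcond /=; apply: eq_bigr => e _.
rewrite (bigD1 (s e)) //= eqxx /= big1 ?addr0 //.
by move=> k /negbTE; rewrite eq_sym => ->.
Qed.

Lemma avt_iff (R : realType) n (E : finType) (s r : E -> 'I_n) (beta : R) tau :
  Avt_beta (R:=R) s r beta tau <->
  (is_state tau /\ (adjmx R s r)^T *m colvec tau = expR beta *: colvec tau).
Proof.
split.
- move=> [st H]; split => //; apply/matrixP => u j.
  rewrite adj_col !mxE.
  have := H (Defs.proj R u); rewrite evs_proj.
  under eq_bigr do rewrite evs_ip /Defs.proj.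
  rewrite [in X in _ -> X]big_mkcond /= => ->.
  rewrite mulrA -expRD subrr expR0 mul1r; apply: eq_bigr => e _.
  by case: ifP; rewrite ?mulr1 ?mulr0.
- move=> [st H]; split => // a.
  have HS u : \sum_(e | r e == u) tau (s e) = expR beta * tau u.
    by move/matrixP: H => /(_ u ord0); rewrite adj_col !mxE.
  under eq_bigr do rewrite evs_ip.
  rewrite (partition_big r xpredT) //=.
  transitivity (expR (- beta) * \sum_(u < n) (a u * (expR beta * tau u))); last first.
    congr (_ * _); apply: eq_bigr => u _; rewrite -HS mulr_sumr.
    by apply: eq_bigr => e /eqP <-; rewrite mulrC.
  rewrite mulr_sumr /evs; apply: eq_bigr => u _.
  have -> : expR (- beta) * (a u * (expR beta * tau u)) =
    (expR (- beta) * expR beta) * (tau u * a u) by ring.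
  by rewrite -expRD addNr expR0 mul1r.
Qed.

Theorem corollary8p7 (R : realType) (n : nat) (E : finType) (s r : E -> 'I_n)
  (beta : R) (hbeta : 0 < beta) :
  (forall tau : 'I_n -> R,
     Tr_beta (R:=R) s r beta tau <->
     (is_state tau /\ (entropy (R:=R) s r tau < beta%:E)%E)) /\
  (forall tau : 'I_n -> R,
     Avt_beta (R:=R) s r beta tau <->
     (is_state tau /\
      (adjmx R s r)^T *m colvec tau = expR beta *: colvec tau)).
Proof.
split; last by move=> tau; exact: avt_iff.
move=> tau.
have Sk0 : is_state tau -> forall k, 0 <= Sk s r tau k.
  move=> [t0 _] k; rewrite Sk_T; apply: sumr_ge0 => v _; rewrite mulr_ge0 ?T_ge0 //.
split.
- move=> [st hs]; split => //; rewrite /entropy; case: asboolP => _.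
    by rewrite lte_fin.
  have [L HL] := series_bound (Sk0 st) hs.
  have [M [l [M1 l0 lb hb]]] := key_bound hbeta st HL.
  by apply: (esup_lt hbeta M1 l0 lb) => k; rewrite Sk0 // hb.
- move=> [st he0]; split => //; move: he0; rewrite /entropy; case: asboolP => [[N HN] _|_ he].
    apply: (series_fin (g := 0) (N := N)) hbeta (Sk0 st) _ => k Nk.
    by rewrite HN // ltW // expR_gt0.
  have [g [N [gb hg]]] := esup_to_bound (Sk0 st) he.
  exact: series_fin gb (Sk0 st) hg.
Qed.
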